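(* Let $m\ge2$ be an integer. Every element $q$ of $\mathbb{Q}_m$ can be represented as $q=\sum_{k=0}^\infty \left(\frac{m}{m+1}\right)^k s_k$ (convergence in $\mathbb{Q}_m$) for a unique sequence $\{s_k\}_{k\ge0}$ with each $s_k\in\{0,1,\dots,m-1\}$.
   Context: $D_m$ is the set of rationals $a/b$ (with $a,b$ coprime integers) such that $\gcd(b,m)=1$; it is a subring of $\mathbb{Q}$ containing $\frac{m}{m+1}$. For $a/b\in D_m$ in lowest terms, $|a/b|_m=m^{-k}$ where $k$ is the largest integer with $m^k\mid a$, and $|0|_m=0$; the metric is $d(u,v)=|u-v|_m$, making $D_m$ a topological ring. $\mathbb{Q}_m$ is the Cauchy completion of $(D_m,d)$, with ring operations and the norm extended by continuity; $D_m$ is identified with its image in $\mathbb{Q}_m$. *)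

(* Defs.v *)
From mathcomp Require Import all_boot all_order all_algebra.
Set Implicit Arguments. Unset Strict Implicit. Unset Printing Implicit Defensive.
Import Order.TTheory GRing.Theory Num.Theory.
Local Open Scope ring_scope.

Definition inDm (m : nat) (x : rat) : bool := coprime `|denq x|%N m.

(* largest k with m^k | a  (for a > 0 and m >= 2 such k satisfies k <= a) *)
Definition mval (m a : nat) : nat := (\max_(k < a.+1 | m ^ k %| a) k)%N.

Definition mnorm (m : nat) (x : rat) : rat :=
  if x == 0 then 0 else ((m%:R)^-1) ^+ (mval m `|numq x|%N).

Definition mdist (m : nat) (u v : rat) : rat := mnorm m (u - v).

Definition cauchyDm (m : nat) (u : nat -> rat) : Prop :=
  (forall n, inDm m (u n)) /\
  forall eps : rat, 0 < eps -> exists N : nat, forall i j : nat,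
      (N <= i)%N -> (N <= j)%N -> mdist m (u i) (u j) < eps.

(* Q_m: the Cauchy completion of D_m; an element is represented by a
   Cauchy sequence (two representatives are the same point iff their
   distance is 0). *)
Record Qm (m : nat) := MkQm { Qm_seq :> nat -> rat ; Qm_cauchy : cauchyDm m Qm_seq }.

Definition embD (x : rat) : nat -> rat := fun _ => x.

(* "d_{Q_m}(x, y) < eps" where d_{Q_m}(x,y) = lim_n d(x_n, y_n):
   unfolded as: eventually d(x_n, y_n) < eps *)
Definition dQm_lt (m : nat) (x y : nat -> rat) (eps : rat) : Prop :=
  exists n0 : nat, forall n : nat, (n0 <= n)%N -> mdist m (x n) (y n) < eps.

Definition Qm_cvg (m : nat) (a : nat -> nat -> rat) (q : nat -> rat) : Prop :=
  forall eps : rat, 0 < eps -> exists N0 : nat, forall N : nat,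
      (N0 <= N)%N -> dQm_lt m (a N) q eps.

Definition digit_psum (m : nat) (s : nat -> nat) (N : nat) : rat :=
  \sum_(k < N) ((m%:R / (m.+1)%:R) ^+ k * (s k)%:R).

Definition digit_series_to (m : nat) (s : nat -> nat) (q : Qm m) : Prop :=
  Qm_cvg m (fun N => embD (digit_psum m s N)) q.

(* Main.v *)
Require Import Defs.
From mathcomp Require Import all_boot all_order all_algebra.
From Stdlib Require Import ClassicalEpsilon.
From Stdlib Require Import FunctionalExtensionality.
Set Implicit Arguments.
From mathcomp Require Import ring lra zify.
Import Order.TTheory GRing.Theory Num.Theory.
Local Open Scope ring_scope.

Definition Dm (m : nat) (x : rat) : Prop :=
  exists (a : int) (b : nat), [/\ (0 < b)%N, coprime b m & x = a%:~R / b%:R].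

Lemma Dm_int m (z : int) : Dm m z%:~R.
Proof. exists z, 1%N; split => //; first exact: coprime1n. by rewrite divr1. Qed.

Lemma Dm_nat m (n : nat) : Dm m n%:R.
Proof. have := Dm_int m n%:Z; by rewrite pmulrn. Qed.

Lemma Dm_add m x y : Dm m x -> Dm m y -> Dm m (x + y).
Proof.
case=> a [b [b0 cb ->]] [c [d [d0 cd ->]]].
exists (a * d%:Z + c * b%:Z), (b * d)%N; split.
- by rewrite muln_gt0 b0 d0.
- by rewrite coprimeMl cb cd.
have hb : (b%:R : rat) != 0 by rewrite pnatr_eq0 -lt0n.
have hd : (d%:R : rat) != 0 by rewrite pnatr_eq0 -lt0n.
rewrite intrD !intrM natrM !pmulrn. field. by rewrite hb hd.
Qed.

Lemma Dm_mul m x y : Dm m x -> Dm m y -> Dm m (x * y).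
Proof.
case=> a [b [b0 cb ->]] [c [d [d0 cd ->]]].
exists (a * c), (b * d)%N; split.
- by rewrite muln_gt0 b0 d0.
- by rewrite coprimeMl cb cd.
have hb : (b%:R : rat) != 0 by rewrite pnatr_eq0 -lt0n.
have hd : (d%:R : rat) != 0 by rewrite pnatr_eq0 -lt0n.
rewrite !intrM natrM. field. by rewrite hb hd.
Qed.

Lemma Dm_opp m x : Dm m x -> Dm m (- x).
Proof.
move=> hx; have -> : - x = (-1)%:~R * x by rewrite mulN1r.
by apply: Dm_mul => //; apply: Dm_int.
Qed.

Lemma Dm_sub m x y : Dm m x -> Dm m y -> Dm m (x - y).
Proof. by move=> hx hy; apply: Dm_add => //; apply: Dm_opp. Qed.

Lemma Dm_exp m x k : Dm m x -> Dm m (x ^+ k).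
Proof.
move=> hx; elim: k => [|k IH]; first by rewrite expr0; apply: (Dm_nat m 1).
by rewrite exprS; apply: Dm_mul.
Qed.

Lemma Dm_invS m : Dm m ((m.+1)%:R^-1).
Proof.
exists 1, m.+1; split => //; first exact: coprimeSn.
by rewrite mul1r.
Qed.

Lemma Dm_sum m (F : nat -> rat) N : (forall k, Dm m (F k)) -> Dm m (\sum_(k < N) F k).
Proof.
move=> hF; elim/big_ind: _ => //; first exact: (Dm_nat m 0).
exact: Dm_add.
Qed.

Definition MD (m K : nat) (x : rat) : Prop :=
  exists y, Dm m y /\ x = (m%:R)^+K * y.

Lemma MD_Dm m K x : MD m K x -> Dm m x.
Proof. case=> y [hy ->]; apply: Dm_mul => //; apply: Dm_exp; apply: Dm_nat. Qed.

Lemma MD0 m K : MD m K 0.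
Proof. exists 0; split; [exact: (Dm_nat m 0) | by rewrite mulr0]. Qed.

Lemma MD_add m K x y : MD m K x -> MD m K y -> MD m K (x + y).
Proof.
case=> a [ha ->] [b [hb ->]]; exists (a + b); split; first exact: Dm_add.
by rewrite mulrDr.
Qed.

Lemma MD_mul m K c x : Dm m c -> MD m K x -> MD m K (c * x).
Proof.
move=> hc [a [ha ->]]; exists (c * a); split; first exact: Dm_mul.
by rewrite mulrCA.
Qed.

Lemma MD_opp m K x : MD m K x -> MD m K (- x).
Proof.
move=> h; rewrite -mulN1r; apply: MD_mul => //; exact: (Dm_int m (-1)).
Qed.

Lemma MD_sub m K x y : MD m K x -> MD m K y -> MD m K (x - y).
Proof. by move=> hx hy; apply: MD_add => //; apply: MD_opp. Qed.

Lemma MD_le m K L x : (K <= L)%N -> MD m L x -> MD m K x.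
Proof.
move=> hKL [a [ha ->]]; exists (m%:R ^+ (L - K) * a); split.
  by apply: Dm_mul => //; apply: Dm_exp; apply: Dm_nat.
by rewrite mulrA -exprD subnKC.
Qed.

Lemma MD_int m K (z : int) : MD m K z%:~R -> (m ^ K %| `|z|)%N.
Proof.
case=> y [[a [b [b0 cb ->]]] hz].
have hb : (b%:R : rat) != 0 by rewrite pnatr_eq0 -lt0n.
have e : (z * b%:Z)%:~R = ((m ^ K)%N%:Z * a)%:~R :> rat.
  rewrite !intrM -!pmulrn natrX hz. field. exact: hb.
have := intr_inj e => /(congr1 absz); rewrite !abszM /= => e2.
have cb' : coprime m b by rewrite coprime_sym.
rewrite -(Gauss_dvdl _ (coprimeXl K cb')) e2.
exact: dvdn_mulr.
Qed.

Lemma Dm_inDm m x : Dm m x -> inDm m x.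
Proof.
case=> a [b [b0 cb hx]].
have hb : (b%:R : rat) != 0 by rewrite pnatr_eq0 -lt0n.
have hd : ((denq x)%:~R : rat) != 0 by rewrite intr_eq0 gt_eqF ?denq_gt0.
have e : (numq x * b%:Z)%:~R = (a * denq x)%:~R :> rat.
  rewrite !intrM -pmulrn.
  have e1 : (numq x)%:~R = a%:~R / b%:R * (denq x)%:~R :> rat.
    by rewrite -hx -{2}(divq_num_den x) divfK.
  rewrite e1.
  field. exact: hb.
have := intr_inj e => /(congr1 absz); rewrite !abszM /= => e2.
rewrite /inDm; apply: (coprime_dvdl _ cb).
rewrite -(Gauss_dvdr _ (_ : coprime `|denq x| `|numq x|)); last first.
  by rewrite coprime_sym coprime_num_den.
by rewrite e2 dvdn_mull.
Qed.

Lemma MD_of_dvd m K x : inDm m x -> (m ^ K %| `|numq x|)%N -> MD m K x.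
Proof.
move=> hx hd.
have hdz : ((m ^ K)%N%:Z %| numq x)%Z by rewrite dvdzE.
have e := divzK hdz.
exists ((numq x %/ (m ^ K)%N%:Z)%Z%:~R / (`|denq x|%N)%:R); split.
  exists (numq x %/ (m ^ K)%N%:Z)%Z, `|denq x|%N; split => //.
  by rewrite absz_gt0 gt_eqF ?denq_gt0.
rewrite -{1}(divq_num_den x) -{1}e intrM -pmulrn natrX.
have -> : (`|denq x|%:R : rat) = (denq x)%:~R by rewrite pmulrn gtz0_abs ?denq_gt0.
by rewrite mulrA [_ * m%:R ^+ K]mulrC -mulrA.
Qed.

Lemma mval_dvd m a k : (1 < m)%N -> (0 < a)%N -> (m ^ k %| a)%N = (k <= mval m a)%N.
Proof.
move=> m1 a0; apply/idP/idP => h.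
  have hk : (k < a.+1)%N.
    rewrite ltnS; apply: leq_trans (ltnW (ltn_expl k m1)) _; exact: dvdn_leq.
  rewrite /mval; exact: (@leq_bigmax_cond _ (fun i : 'I_a.+1 => m ^ i %| a)%N (fun i => nat_of_ord i) (Ordinal hk)).
have hv : (m ^ mval m a %| a)%N.
  rewrite /mval; elim/big_ind: _ => //.
  by move=> x y hx hy; case/orP: (leq_total x y) => hxy; [move/maxn_idPr: hxy => -> | move/maxn_idPl: hxy => ->].
exact: dvdn_trans (dvdn_exp2l _ h) hv.
Qed.

Lemma minv_pos m : (1 < m)%N -> 0 < (m%:R : rat)^-1 /\ (m%:R : rat)^-1 < 1.
Proof.
move=> m1; have m0 : (0 < m)%N := ltnW m1.
split; first by rewrite invr_gt0 ltr0n.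
by rewrite invf_lt1 ?ltr0n // ltr1n.
Qed.

Lemma MD_norm_le m K x : (1 < m)%N -> MD m K x -> mnorm m x <= (m%:R^-1)^+K.
Proof.
move=> m1 hx; have [h0 h1] := @minv_pos m m1.
rewrite /mnorm; case: eqP => [_|/eqP x0]; first by rewrite exprn_ge0 // ltW.
rewrite ler_iXn2l // -mval_dvd //; last by rewrite absz_gt0 numq_eq0.
have e : x * (denq x)%:~R = (numq x)%:~R.
  by rewrite -{1}(divq_num_den x) divfK // intr_eq0 gt_eqF ?denq_gt0.
apply: MD_int; rewrite -e mulrC; apply: MD_mul => //; exact: Dm_int.
Qed.

Lemma MD_norm_lt m K x : (1 < m)%N -> Dm m x -> mnorm m x < (m%:R^-1)^+K -> MD m K.+1 x.
Proof.
move=> m1 hx; have [h0 h1] := @minv_pos m m1.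
rewrite /mnorm; case: eqP => [->|/eqP x0 hlt]; first by move=> _; exact: MD0.
apply: MD_of_dvd; first exact: Dm_inDm.
rewrite mval_dvd //; last by rewrite absz_gt0 numq_eq0.
by move: hlt; rewrite ltr_iXn2l.
Qed.

Lemma inDm_Dm m x : inDm m x -> Dm m x.
Proof.
move=> h; exists (numq x), `|denq x|%N; split => //.
  by rewrite absz_gt0 gt_eqF ?denq_gt0.
by rewrite -{1}(divq_num_den x) pmulrn gtz0_abs ?denq_gt0.
Qed.

Lemma digit_ex m x : (1 < m)%N -> Dm m x -> exists s, (s < m)%N /\ MD m 1 (x - s%:R).
Proof.
move=> m1 [a [b [b0 cb ->]]].
have hb : (b%:R : rat) != 0 by rewrite pnatr_eq0 -lt0n.
have [u [v huv]] := Bezoutz b%:Z m%:Z.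
have e1 : u * b%:Z + v * m%:Z = 1 by rewrite huv /gcdz /= (eqP cb).
have mz0 : (m%:Z != 0) by rewrite eqz_nat -lt0n ltnW.
set t := ((a * u) %% m%:Z)%Z.
set Q := ((a * u) %/ m%:Z)%Z.
have t0 : 0 <= t by apply: modz_ge0.
have tm : t < m%:Z by apply: ltz_pmod; rewrite ltz_nat ltnW.
have et := divz_eq (a * u) m%:Z; rewrite -/t -/Q in et.
exists `|t|%N; split.
  by rewrite -ltz_nat gez0_abs.
have ei : a - t * b%:Z = m%:Z * (a * v + Q * b%:Z).
  have -> : t = a * u - Q * m%:Z by rewrite et addrC addKr.
  have ea : a = a * (u * b%:Z + v * m%:Z) by rewrite e1 mulr1.
  rewrite {1}ea; ring.
exists ((a * v + Q * b%:Z)%:~R / b%:R); split.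
  exists (a * v + Q * b%:Z), b; split => //.
have -> : (`|t|%N%:R : rat) = t%:~R by rewrite pmulrn gez0_abs.
have -> : a%:~R / b%:R - t%:~R = (a - t * b%:Z)%:~R / (b%:R : rat).
  rewrite intrB intrM -pmulrn; field; exact: hb.
by rewrite ei intrM expr1 mulrA -pmulrn.
Qed.

Lemma digit_uniq m s t : (1 < m)%N -> (s < m)%N -> (t < m)%N ->
  MD m 1 (s%:R - t%:R) -> s = t.
Proof.
move=> m1 hs ht h.
have : MD m 1 ((s%:Z - t%:Z)%:~R) by rewrite intrB -!pmulrn.
move/MD_int; rewrite expn1 => hd.
have hlt : (`|s%:Z - t%:Z| < m)%N by lia.
have h0 : `|s%:Z - t%:Z|%N = 0%N.
  apply/eqP; apply: contraTT hlt; rewrite -lt0n -leqNgt => hp.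
  exact: dvdn_leq.
lia.
Qed.

Definition dig (m : nat) (x : rat) : nat :=
  epsilon (inhabits 0%N) (fun s => (s < m)%N /\ MD m 1 (x - s%:R)).
Definition nxt (m : nat) (x : rat) : rat := (x - (dig m x)%:R) * (m.+1)%:R / m%:R.
Definition xs (m : nat) (x : rat) (k : nat) : rat := iter k (nxt m) x.
Definition ds (m : nat) (x : rat) (k : nat) : nat := dig m (xs m x k).

Lemma dig_spec m x : (1 < m)%N -> Dm m x -> (dig m x < m)%N /\ MD m 1 (x - (dig m x)%:R).
Proof. move=> m1 hx; exact: (epsilon_spec (inhabits 0%N) (fun s => (s < m)%N /\ MD m 1 (x - s%:R)) (digit_ex m1 hx)). Qed.

Lemma Dm_r m : Dm m (m%:R / (m.+1)%:R).
Proof. apply: Dm_mul; [exact: Dm_nat | exact: Dm_invS]. Qed.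

Lemma nxt_spec m x : (1 < m)%N -> Dm m x ->
  Dm m (nxt m x) /\ x = (dig m x)%:R + m%:R / (m.+1)%:R * nxt m x.
Proof.
move=> m1 hx; have [_ [y [hy e]]] := dig_spec m1 hx.
have hm : (m%:R : rat) != 0 by rewrite pnatr_eq0 -lt0n ltnW.
have hm1 : ((m.+1)%:R : rat) != 0 by rewrite pnatr_eq0.
split.
  rewrite /nxt e expr1.
  have -> : m%:R * y * m.+1%:R / m%:R = y * (m.+1)%:R by field.
  by apply: Dm_mul => //; apply: Dm_nat.
rewrite /nxt; field. by rewrite hm /= addrC natr1.
Qed.

Lemma xs_Dm m x k : (1 < m)%N -> Dm m x -> Dm m (xs m x k).
Proof.
move=> m1 hx; elim: k => [|k IH]; first by [].
by change (Dm m (nxt m (xs m x k))); have [] := nxt_spec m1 IH.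
Qed.

Lemma ds_lt m x k : (1 < m)%N -> Dm m x -> (ds m x k < m)%N.
Proof. by move=> m1 hx; have [] := dig_spec m1 (xs_Dm k m1 hx). Qed.

Lemma expand m x N : (1 < m)%N -> Dm m x ->
  x = digit_psum m (ds m x) N + (m%:R / (m.+1)%:R) ^+ N * xs m x N.
Proof.
move=> m1 hx; elim: N => [|N IH].
  by rewrite /digit_psum big_ord0 expr0 mul1r add0r.
rewrite /digit_psum big_ord_recr /= -/(digit_psum m (ds m x) N).
have [_ e] := nxt_spec m1 (xs_Dm N m1 hx).
change (xs m x N.+1) with (nxt m (xs m x N)).
rewrite {1}IH {1}e /ds exprSr; ring.
Qed.

Lemma MD_rN m N y : Dm m y -> MD m N ((m%:R / (m.+1)%:R) ^+ N * y).
Proof.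
move=> hy; exists (((m.+1)%:R^-1) ^+ N * y); split.
  by apply: Dm_mul => //; apply: Dm_exp; apply: Dm_invS.
by rewrite exprMn mulrA.
Qed.

Lemma Dm_psum m s N : Dm m (digit_psum m s N).
Proof.
rewrite /digit_psum; apply: (@Dm_sum m (fun k => (m%:R / (m.+1)%:R) ^+ k * (s k)%:R)) => k; apply: Dm_mul; [apply: Dm_exp; exact: Dm_r | exact: Dm_nat].
Qed.

Lemma psum_recl m s N : digit_psum m s N.+1 =
  (s 0%N)%:R + m%:R / (m.+1)%:R * digit_psum m (fun k => s k.+1) N.
Proof.
rewrite /digit_psum big_ord_recl /= expr0 mul1r mulr_sumr; congr (_ + _).
by apply: eq_bigr => i _; rewrite /bump /= exprS mulrA.
Qed.

Lemma psum_uniq m K : (1 < m)%N -> forall N s t, (K <= N)%N ->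
  (forall k, (s k < m)%N) -> (forall k, (t k < m)%N) ->
  MD m K (digit_psum m s N - digit_psum m t N) -> forall k, (k < K)%N -> s k = t k.
Proof.
move=> m1; elim: K => [|K IH] N s t hKN hs ht hD k hk //.
case: N hKN hD => [//|N] hKN hD.
rewrite !psum_recl in hD.
set D := digit_psum m (fun k => s k.+1) N - digit_psum m (fun k => t k.+1) N in hD.
have hDm : Dm m D by apply: Dm_sub; apply: Dm_psum.
have e : (s 0%N)%:R + m%:R / (m.+1)%:R * digit_psum m (fun k => s k.+1) N -
   ((t 0%N)%:R + m%:R / (m.+1)%:R * digit_psum m (fun k => t k.+1) N) =
   ((s 0%N)%:R - (t 0%N)%:R) + m%:R / (m.+1)%:R * D by rewrite /D; ring.
rewrite e in hD.
have hrD : MD m 1 (m%:R / (m.+1)%:R * D) by rewrite -(expr1 (m%:R / _)); apply: MD_rN.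
have h0 : s 0%N = t 0%N.
  apply: digit_uniq; [exact: m1 | exact: hs | exact: ht |].
  have -> : (s 0%N)%:R - (t 0%N)%:R = ((s 0%N)%:R - (t 0%N)%:R + m%:R / (m.+1)%:R * D) - m%:R / (m.+1)%:R * D by ring.
  apply: MD_sub => //; exact: MD_le hD.
rewrite h0 subrr add0r in hD.
have hm : (m%:R : rat) != 0 by rewrite pnatr_eq0 -lt0n ltnW.
have hm1 : ((m.+1)%:R : rat) != 0 by rewrite pnatr_eq0.
have hDK : MD m K D.
  case: hD => y [hy ey]; exists ((m.+1)%:R * y); split.
    by apply: Dm_mul => //; apply: Dm_nat.
  have -> : D = (m.+1)%:R / m%:R * (m%:R / (m.+1)%:R * D).
    field. by rewrite addrC natr1 !pnatr_eq0 /= -lt0n ltnW.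
  rewrite ey exprS; field; exact: hm.
case: k hk => [_|k hk]; first exact: h0.
exact: (IH N (fun k => s k.+1) (fun k => t k.+1)).
Qed.

Lemma ds_cong m K x y : (1 < m)%N -> Dm m x -> Dm m y -> MD m K (x - y) ->
  forall k, (k < K)%N -> ds m x k = ds m y k.
Proof.
move=> m1 hx hy hxy; apply: (@psum_uniq m K m1 K _ _ (leqnn K)).
- by move=> k; apply: ds_lt.
- by move=> k; apply: ds_lt.
have -> : digit_psum m (ds m x) K - digit_psum m (ds m y) K =
  (x - y) - ((m%:R / (m.+1)%:R) ^+ K * xs m x K - (m%:R / (m.+1)%:R) ^+ K * xs m y K).
  have ex := expand K m1 hx; have ey := expand K m1 hy.
  move: ex ey; set Px := digit_psum m (ds m x) K; set Py := digit_psum m (ds m y) K.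
  set Ax := xs m x K; set Ay := xs m y K; move=> ex ey.
  rewrite {1}ex {1}ey; ring.
by apply: MD_sub => //; apply: MD_sub; apply: MD_rN; apply: xs_Dm.
Qed.

Lemma small_pow m (eps : rat) : (1 < m)%N -> 0 < eps -> exists N, (m%:R^-1)^+N < eps.
Proof.
move=> m1 he.
have hei : 0 <= eps^-1 by rewrite invr_ge0 ltW.
have hB := @archi_boundP _ (eps^-1) hei.
exists (Num.Def.archi_bound eps^-1).
have m0 : (0 < m)%N := ltnW m1.
have hM : (0 : rat) < m%:R ^+ Num.Def.archi_bound eps^-1 by rewrite exprn_gt0 // ltr0n.
rewrite exprVn invf_plt ?posrE //.
apply: (lt_le_trans hB); rewrite -natrX ler_nat; exact: ltnW (ltn_expl _ m1).
Qed.

Lemma conv_uniq m (q : Qm m) s t : (1 < m)%N -> (forall n, Dm m (q n)) ->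
  (forall k, (s k < m)%N) -> (forall k, (t k < m)%N) ->
  digit_series_to s q -> digit_series_to t q -> forall k, s k = t k.
Proof.
move=> m1 hD hs ht hcs hct k.
have [h0 h1] := @minv_pos m m1.
have he : 0 < (m%:R^-1 : rat)^+k.+1 by rewrite exprn_gt0.
have [N0s H1] := hcs _ he; have [N0t H2] := hct _ he.
have l1 : (N0s <= k.+1 + N0s + N0t)%N by lia.
have l2 : (N0t <= k.+1 + N0s + N0t)%N by lia.
have [n0s H3] := H1 _ l1.
have [n0t H4] := H2 _ l2.
have a := H3 (n0s + n0t)%N (leq_addr _ _); have b := H4 (n0s + n0t)%N (leq_addl _ _).
rewrite /mdist /embD in a b.
have Ma := @MD_norm_lt m k.+1 _ m1 (Dm_sub (Dm_psum m s _) (hD _)) a.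
have Mb := @MD_norm_lt m k.+1 _ m1 (Dm_sub (Dm_psum m t _) (hD _)) b.
have := MD_sub Ma Mb.
set Ps := digit_psum m s _; set Pt := digit_psum m t _; set Q := q _.
rewrite (_ : Ps - Q - (Pt - Q) = Ps - Pt); last by ring.
move=> hM.
apply: (@psum_uniq m k.+1 m1 (k.+1 + N0s + N0t)%N s t _ hs ht _ k (ltnSn k)).
  by lia.
exact: MD_le hM.
Qed.

Theorem mainTheorem11 (m : nat) (hm : (2 <= m)%N) (q : Qm m) :
  exists! s : nat -> nat, (forall k, (s k < m)%N) /\ digit_series_to s q.
Proof.
have m1 : (1 < m)%N := hm.
have [h0 h1] := @minv_pos m m1.
have [hin hc] := Qm_cauchy q.
have hD : forall n, Dm m (q n) by move=> n; apply: inDm_Dm.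
have hK : forall K, exists N, forall i j, (N <= i)%N -> (N <= j)%N -> MD m K (q i - q j).
  move=> K; have he : 0 < (m%:R^-1 : rat)^+K by rewrite exprn_gt0.
  have [N hN] := hc _ he; exists N => i j hi hj.
  apply: (@MD_le m K K.+1) => //; apply: MD_norm_lt => //; first by apply: Dm_sub.
  exact: hN.
pose nK := fun K => epsilon (inhabits 0%N)
  (fun N => forall i j, (N <= i)%N -> (N <= j)%N -> MD m K (q i - q j)).
have hnK : forall K i j, (nK K <= i)%N -> (nK K <= j)%N -> MD m K (q i - q j).
  move=> K; exact: (epsilon_spec (inhabits 0%N)
    (fun N => forall i j, (N <= i)%N -> (N <= j)%N -> MD m K (q i - q j)) (hK K)).
pose s := fun k => ds m (q (nK k.+1)) k.
have hs_eq : forall N n, (\max_(k < N) nK k.+1 <= n)%N -> forall k, (k < N)%N ->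
    ds m (q n) k = s k.
  move=> N n hn k hk.
  have hkn : (nK k.+1 <= n)%N.
    apply: leq_trans hn.
    exact: (@leq_bigmax _ (fun i : 'I_N => nK i.+1) (Ordinal hk)).
  exact: (ds_cong m1 (hD n) (hD _) (hnK k.+1 n (nK k.+1) hkn (leqnn _))).
have hs : forall k, (s k < m)%N by move=> k; apply: ds_lt.
have hcs : digit_series_to s q.
  move=> eps he; have [N0 hN0] := @small_pow m eps m1 he.
  exists N0 => N hN; exists (\max_(k < N) nK k.+1) => n hn.
  rewrite /mdist /embD.
  have -> : digit_psum m s N = digit_psum m (ds m (q n)) N.
    by apply: eq_bigr => k _; rewrite (hs_eq N n hn k (ltn_ord k)).
  have ex := expand N m1 (hD n); move: ex.
  set P := digit_psum m _ N; set A := xs m _ N; set Q := q n => ex.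
  rewrite {1}ex (_ : P - (P + (m%:R / (m.+1)%:R) ^+ N * A) = - ((m%:R / (m.+1)%:R) ^+ N * A)); last by ring.
  apply: le_lt_trans (MD_norm_le m1 (MD_opp (MD_rN N (xs_Dm N m1 (hD n))))) _.
  apply: le_lt_trans hN0; by rewrite ler_iXn2l.
exists s; split; first by split.
move=> t [ht hct]; apply: functional_extensionality => k.
exact: (conv_uniq m1 hD hs ht hcs hct).
Qed.
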